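(* Let $(\mathbb S,+,\cdot)$ be an S-Field with Base Unit $A$, let $s\in\mathbb S$ and let $m\in\mathbb S_0$ with $m\neq 0$. Then there exist $x,y\in\mathbb S_0$ with $s=x-1+y\cdot A$, and, for such $x,y$, Division By Scalars is given by the unique formula $$\frac{s}{m}=m^{-1}\cdot[x+y-(m^{-1}\cdot y)]-1+(m^{-1}\cdot y)\cdot A.$$
   Context: An S-Structure is a triple $(\mathbb S,+,\cdot)$ where $\mathbb S$ is a set and $+,\cdot$ are binary operations on $\mathbb S$ such that: $(\mathbb S,+)$ is a commutative group with identity $0$ (the inverse of $s$ is written $-s$, and $s-t:=s+(-t)$); $\mathbb S$ is closed under $\cdot$; and there exists $s\in\mathbb S$ with $0\cdot s\neq 0$ or $s\cdot 0\neq 0$. Multiplication binds tighter than addition. The structures considered come with a distinguished element of $\mathbb S$ denoted $1$. It is Commutative if $s\cdot t=t\cdot s$ for all $s,t$. For a Commutative S-Structure and $\alpha\in\mathbb S$, put $\mathbb S_\alpha=\{s\in\mathbb S:0\cdot s=s\cdot 0=\alpha\}$ and $\Lambda=\{\alpha\in\mathbb S:\mathbb S_\alpha\neq\emptyset\}$. Wheel Distributive: $s\cdot(t+r)+(s\cdot 0)=(s\cdot t)+(s\cdot r)$ for all $s,t,r\in\mathbb S$. S-Associative: for all $m,n\in\mathbb S_0$ and $s\in\mathbb S$, $m\cdot(n\cdot s)=(m\cdot n)\cdot s-([(m-1)\cdot(n-1)]\cdot(0\cdot s))$. Base: if $\mathbb S_0\neq\emptyset$ and $\alpha\in\Lambda$,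 $q\in\mathbb S_\alpha$ is a Base for $\mathbb S_\alpha$ if $q+\beta\in\mathbb S_\alpha$ for all $\beta\in\mathbb S_0$ and every $s\in\mathbb S_\alpha$ equals $q+\beta$ for some $\beta\in\mathbb S_0$. Coordinated: $\mathbb S_0\neq\emptyset$ and every $\mathbb S_\alpha$ with $\alpha\in\Lambda$ has a Base. Standard Bases: a Coordinated Commutative S-Structure has Standard Bases if there is a specified element $q_0(1)\in\mathbb S_1$ which is a Base for $\mathbb S_1$, and for every $\alpha\in\Lambda$ the element $q_0(\alpha):=\alpha\cdot(q_0(1)+1)-1$ lies in $\mathbb S_\alpha$ and is a Base for $\mathbb S_\alpha$. The Base Unit is $A:=q_0(1)+1$. An Essential S-Structure is an S-Structure that is Commutative, Wheel Distributive, S-Associative, has Standard Bases (in particular is Coordinated), satisfies $0,1\in\mathbb S_0$, and satisfies $\mathbb S_0=\{1\cdot x:x\in\mathbb S_0\}$. A Unity is an element $e\in\Lambda$ with $e\cdot s=s\cdot e=s$ for all $s\in\mathbb S$. Scalar Inverses: the structure has a Unity $e$ and for every $x\in\mathbb S_0$ with $x\neq 0$ there is $x^{-1}\in\mathbb S_0$ with $x\cdot x^{-1}=x^{-1}\cdot x=e$. An S-Ring is an Essential S-Structure with a Unity; an S-Field is an S-Ring with Scalar Inverses. Division By Scalars: for $s\in\mathbb S$ and $m\in\mathbb S_0$, $\frac{s}{m}$ denotes an element $q\in\mathbb S$ such that $s=m\cdot q=q\cdot m$. *)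

(* Defs.v *)
(* An S-Structure is modelled as a commutative group
   (V : zmodType, i.e. (S,+) with 0, -, +) together with an arbitrary binary
   operation [mul] (the "·" of the paper) and a distinguished element [one]
   (the paper's 1, which is NOT a ring unit).  *)
From mathcomp Require Import all_boot all_algebra.
Set Implicit Arguments. Unset Strict Implicit. Unset Printing Implicit Defensive.
Import GRing.Theory.
Local Open Scope ring_scope.

Section SStructures.
Variables (V : zmodType) (mul : V -> V -> V) (one : V).

(* S-Structure: (V,+) is a commutative group (built into zmodType), closure
   under mul is built into its type, and mul is not absorbing at 0. *)
Definition S_Structure : Prop :=
  exists s : V, mul 0 s <> 0 \/ mul s 0 <> 0.

Definition S_Commutative : Prop := forall s t : V, mul s t = mul t s.

Definition S_ (alpha : V) (s : V) : Prop := mul 0 s = alpha /\ mul s 0 = alpha.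
Definition S0 (s : V) : Prop := S_ 0 s.

Definition Lambda (alpha : V) : Prop := exists s, S_ alpha s.

Definition Wheel_Distributive : Prop :=
  forall s t r : V, mul s (t + r) + mul s 0 = mul s t + mul s r.

Definition S_Associative : Prop :=
  forall m n s : V, S0 m -> S0 n ->
    mul m (mul n s) = mul (mul m n) s - mul (mul (m - one) (n - one)) (mul 0 s).

(* q is a Base for S_alpha (the paper requires S_0 nonempty and alpha in Lambda) *)
Definition is_Base (alpha q : V) : Prop :=
  S_ alpha q /\
  (forall beta, S0 beta -> S_ alpha (q + beta)) /\
  (forall s, S_ alpha s -> exists beta, S0 beta /\ s = q + beta).

Definition Coordinated : Prop :=
  (exists s, S0 s) /\ forall alpha, Lambda alpha -> exists q, is_Base alpha q.

Definition q0 (q01 alpha : V) : V := mul alpha (q01 + one) - one.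

Definition Standard_Bases (q01 : V) : Prop :=
  S_ one q01 /\ is_Base one q01 /\
  forall alpha, Lambda alpha -> S_ alpha (q0 q01 alpha) /\ is_Base alpha (q0 q01 alpha).

Definition Base_Unit (q01 : V) : V := q01 + one.

Definition Essential (q01 : V) : Prop :=
  S_Structure /\ S_Commutative /\ Wheel_Distributive /\ S_Associative /\
  Coordinated /\ Standard_Bases q01 /\ S0 0 /\ S0 one /\
  (forall z, S0 z <-> exists x, S0 x /\ z = mul one x).

Definition is_Unity (e : V) : Prop :=
  Lambda e /\ forall s, mul e s = s /\ mul s e = s.

Definition Scalar_Inverses : Prop :=
  exists e, is_Unity e /\
    forall x, S0 x -> x <> 0 -> exists xinv, S0 xinv /\ mul x xinv = e /\ mul xinv x = e.

Definition S_Ring (q01 : V) : Prop := Essential q01 /\ exists e, is_Unity e.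

Definition S_Field (q01 : V) : Prop := S_Ring q01 /\ Scalar_Inverses.

End SStructures.

(* Main.v *)
Require Import Defs.
From mathcomp Require Import all_boot all_algebra.
Import GRing.Theory.
Local Open Scope ring_scope.

Lemma canc {V : zmodType} {x y : V} : x = x - y -> y = 0.
Proof. by move=> h; apply: oppr_inj; rewrite oppr0; apply: (@addrI _ x); rewrite addr0 -h. Qed.

Lemma lin1 (V : zmodType) (x y u m o yA : V) :
  x - o + yA = (x + y - u) - m + yA - ((y - u) - (m - o)).
Proof.
rewrite [RHS]addrAC opprB opprB addrA (addrC _ (u - y)) !addrA addrNK.
congr (_ - o + yA); rewrite [u - y + x]addrC -(addrA x) subrK addrK //.
Qed.

Theorem proposition4p1p1 (V : zmodType) (mul : V -> V -> V) (one q01 : V)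
  (HF : S_Field mul one q01) (s m : V) (Hm : S0 mul m) (Hm0 : m <> 0) :
  let A := Base_Unit one q01 in
  (exists x y, S0 mul x /\ S0 mul y /\ s = x - one + mul y A) /\
  (forall x y, S0 mul x -> S0 mul y -> s = x - one + mul y A ->
   forall e minv, is_Unity mul e -> S0 mul minv -> mul m minv = e -> mul minv m = e ->
   let q := mul minv (x + y - mul minv y) - one + mul (mul minv y) A in
   (s = mul m q /\ s = mul q m) /\
   (forall q', s = mul m q' -> s = mul q' m -> q' = q)).
Proof.
move=> A.
case: HF => [[[_ [Hc [Hwd [Has [_ [Hstd [H00 [H1 Hess]]]]]]]] [e0 [_ He0]]] _].
case: Hstd => [Hq01a [_ Hq0]].
have m00 : mul 0 0 = 0 by case: H00.
have mulD : forall s t r, mul s (t + r) = mul s t + mul s r - mul s 0.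
  by move=> s0 t r; rewrite -Hwd addrK.
have kD : forall k t r, mul k 0 = 0 -> mul k (t + r) = mul k t + mul k r.
  by move=> k t r hk; rewrite mulD hk subr0.
have kN : forall k t, mul k 0 = 0 -> mul k (- t) = - mul k t.
  by move=> k t hk; apply/eqP; rewrite -addr_eq0 -kD // addNr hk.
have kB : forall k t r, mul k 0 = 0 -> mul k (t - r) = mul k t - mul k r.
  by move=> k t r hk; rewrite kD // kN.
have S0I : forall k, mul 0 k = 0 -> S0 mul k by move=> k h; split => //; rewrite Hc.
have S0D : forall a b, S0 mul a -> S0 mul b -> S0 mul (a + b).
  by move=> a b [ha _] [hb _]; apply: S0I; rewrite kD // ha hb addr0.
have S0N : forall a, S0 mul a -> S0 mul (- a).
  by move=> a [ha _]; apply: S0I; rewrite kN // ha oppr0.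
have S0B : forall a b, S0 mul a -> S0 mul b -> S0 mul (a - b).
  by move=> a b ha hb; apply: S0D => //; apply: S0N.
have eU : forall s, mul e0 s = s := fun s => (He0 s).1.
have eS0 : S0 mul e0 by apply: S0I; rewrite Hc eU.
have S0M : forall a b, S0 mul a -> S0 mul b -> S0 mul (mul a b).
  move=> a b ha hb.
  have h1 := Has a b e0 ha hb.
  rewrite (Hc b e0) (eU b) (Hc (mul a b) e0) (eU (mul a b)) (Hc 0 e0) (eU 0) in h1.
  have hz := canc h1.
  have h2 := Has a b 0 ha hb.
  rewrite (proj2 hb) (proj2 ha) m00 hz subr0 in h2.
  by apply: S0I; rewrite Hc -h2.
have T : forall n s, S0 mul n -> mul (mul (e0 - one) (n - one)) (mul 0 s) = 0.
  by move=> n s0 hn; have h := Has e0 n s0 eS0 hn; rewrite !eU in h; exact: canc h.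
have g0A : mul 0 A = one.
  by rewrite /A /Base_Unit kD // (proj1 Hq01a) (proj1 H1) addr0.
have Tp : forall n, S0 mul n -> mul (mul (e0 - one) (n - one)) one = 0.
  by move=> n hn; have := T n A hn; rewrite g0A.
have e1S : S0 mul (e0 - one) by apply: S0B.
have o0 : mul one 0 = 0 := proj2 H1.
have e10 : mul (e0 - one) 0 = 0 := proj2 e1S.
have me1 : mul (e0 - one) one = one - mul one one.
  by rewrite Hc kB // (Hc one e0) eU.
have h0 := Tp 0 H00.
rewrite sub0r kN // me1 Hc kN // kB // in h0.
move/eqP: h0; rewrite oppr_eq0 subr_eq0 => /eqP h0.
have h := Tp e0 eS0.
rewrite kB // (proj2 (He0 _)) me1 Hc kB // kB // (Hc one e0) eU kB // -h0 subrr subr0 in h.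
move/eqP: h; rewrite subr_eq0 => /eqP pp.
have oneS0 : forall k, S0 mul k -> mul one k = k.
  move=> k /Hess [x [hx ->]].
  have h := Has one one x H1 H1.
  by rewrite subrr m00 (proj1 hx) m00 subr0 -pp in h.
have E1 : e0 = one by rewrite -(oneS0 _ eS0) Hc eU.
subst e0.
have gg : forall t, mul 0 (mul 0 t) = 0.
  by move=> t; have := Has one one t H1 H1; rewrite !eU subrr m00 => /canc.
clear T Tp me1 e1S e10 h0 pp.
split.
  set alpha := mul 0 s.
  have hL : Lambda mul alpha by exists s; split => //; rewrite Hc.
  case: (Hq0 alpha hL) => _ [_ [_ hb]].
  case: (hb s (conj erefl (Hc s 0))) => beta [hbeta ->].
  exists beta, alpha; split => //; split; first by apply: S0I; apply: gg.
  by rewrite /q0 /A [RHS]addrC addrA addrAC.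
move=> x y hx hy hs e minv he hminv hme hem q.
have ee : e = one by rewrite -(proj1 (proj2 he one)) Hc eU.
rewrite ee in hme hem; clear he ee.
have assocS : forall a b t, S0 mul a -> S0 mul b -> S0 mul t -> mul a (mul b t) = mul (mul a b) t.
  move=> a b t ha hb ht; rewrite Has // (proj1 ht).
  by rewrite (proj2 (S0M _ _ (S0B _ _ ha H1) (S0B _ _ hb H1))) subr0.
pose u := mul minv y.
have hu : S0 mul u by apply: S0M.
pose w := x + y - u.
have hw : S0 mul w by apply: S0B => //; apply: S0D.
have mu : mul m u = y by rewrite /u assocS // hme eU.
have mw : mul m (mul minv w) = w by rewrite assocS // hme eU.
have muA : mul m (mul u A) = mul y A - mul (mul (m - one) (u - one)) one.
  by rewrite Has // mu g0A.
have z' : mul (mul (m - one) (u - one)) one = (y - u) - (m - one).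
  rewrite [mul _ one]Hc eU kB ?(proj2 (S0B _ _ Hm H1)) // [mul (m - one) u]Hc kB ?(proj2 hu) //.
  by rewrite [mul u m]Hc mu [mul u one]Hc eU [mul (m - one) one]Hc eU.
have mq : mul m q = s.
  rewrite /q -/u -/w kD ?(proj2 Hm) // kB ?(proj2 Hm) // mw muA z' [mul m one]Hc eU hs /w.
  by rewrite addrA; symmetry; apply: lin1.
split; first by split; [rewrite mq | rewrite Hc mq].
move=> q' h1 _.
have gmul : forall n t, S0 mul n -> mul 0 (mul n t) = mul n (mul 0 t).
  move=> n t hn.
  have cS : S0 mul (mul 0 t) by apply: S0I; apply: gg.
  rewrite Has // (proj1 hn) sub0r [mul (- one) _]Hc kN ?(proj2 (S0B _ _ hn H1)) //.
  rewrite [mul (n - one) one]Hc eU [mul (- _) _]Hc kN ?(proj2 cS) // kB ?(proj2 cS) //.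
  by rewrite [mul _ one]Hc eU [mul (mul 0 t) n]Hc opprK addrC subrK.
have zS : S0 mul (mul (minv - one) (m - one)) by apply: S0M; apply: S0B.
have inv : forall t, mul minv (mul m t) = t - mul (mul (minv - one) (m - one)) (mul 0 t).
  by move=> t; rewrite Has // hem eU.
have eqm : mul m q' = mul m q by rewrite -h1 mq.
have gq : mul 0 q' = mul 0 q.
  have := congr1 (mul 0) eqm; rewrite !gmul // => h.
  by have := congr1 (mul minv) h; rewrite !inv !gg !(proj2 zS) !subr0.
by have := congr1 (mul minv) eqm; rewrite !inv gq => /addIr.
Qed.
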